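(* Let $(x_n)$ be generated by (HPPA). Assume there are monotone functions ${\rm a},{\rm b},{\rm B},{\rm E}:\mathbb{N}\to\mathbb{N}$ satisfying (Q1), (Q3'), (Q3), (Q4) respectively, and a function ${\rm A'}:\mathbb{N}\times\mathbb{N}\to\mathbb{N}$, monotone in both variables, satisfying (Q2'). Let $\mathcal{E},\mathcal{D}\in\mathbb{N}$ satisfy $\mathcal{E}\geq 1+\sum_{i=0}^{{\rm E}(0)}\|e_i\|$ and $\mathcal{D}\geq\|x_0-p\|$ for some $p\in S$, and set $N:=\max\{2\mathcal{D},\mathcal{D}+\mathcal{E}\}$. Then for every $k\in\mathbb{N}$ and every monotone $f:\mathbb{N}\to\mathbb{N}$, $$\exists n\leq\Phi_2(k,f)\ \forall i,j\in[n,f(n)]\ \left(\|x_i-x_j\|\leq\frac{1}{k+1}\right),$$ where $\Phi_2(k,f):=\sigma_2(\tilde k,g(\Delta))$ and: $\sigma_2(k',n'):={\rm A'}\big(n',\,16N^2(k'+1)-1\big)+1$; $\tilde k:=4(k+1)^2-1$; $g(m):=\max\{m,\ {\rm E}(16(1+4N)(k+1)^2-1)+1\}$; $\bar h_f(m):=(1+4N)\big(16(k+1)^2(f(\sigma_2(\tilde k,g(m)))+1)+1\big)-1$; $\Delta:=\Psi(32(k+1)^2-1,\,\bar h_f)$, where for $k'\in\mathbb{N}$ and monotone $u:\mathbb{N}\to\mathbb{N}$, $\Psi(k',u):=\chi_1\big(24N(w_{\hat\nu_u,N}^{(R)}(0)+1)^2\big)$ with $R:=4N^4(k'+1)^2$,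 $\nu_u(m):=\max\{2,{\rm b}(u(m))\}(u(m)+1)-1$, $\hat\nu_u(m):=\nu_u(\chi_1(m))$, $w_{v,N}(m):=\max\{v(24N(m+1)^2),24N(m+1)^2\}$, $\xi(k''):=\max\{{\rm a}(2(2\mathcal{D}+\mathcal{E})(k''+1)-1),{\rm E}(2k''+1)+1\}$ and $\chi_1(k''):=\max\{\xi(4k''+3),{\rm B}(8(\mathcal{D}+\mathcal{E})(k''+1)-1)\}+1$.
   Context: $X$ is a real Hilbert space, $\mathsf{A}:X\to 2^X$ a maximal monotone operator with zero set $S=\{x:0\in\mathsf{A}(x)\}$, assumed nonempty. For $\beta>0$, $J_\beta:=(Id+\beta\mathsf{A})^{-1}$ is the resolvent, a single-valued nonexpansive map with fixed point set $S$. Given $(\alpha_n)\subset\,]0,1[$, $(\beta_n)\subset(0,\infty)$, $(e_n)\subset X$, $x_0\in X$, (HPPA) is the sequence $x_{n+1}:=\alpha_n x_0+(1-\alpha_n)(J_{\beta_n}(x_n)+e_n)$. (Q1): $\forall k\,\forall n\geq{\rm a}(k)\ \alpha_n\leq\frac{1}{k+1}$. (Q2'): $\forall k,m\ \prod_{i=m}^{{\rm A'}(m,k)}(1-\alpha_i)\leq\frac{1}{k+1}$. ${\rm A'}$ monotone in both variables: $k\le k'$, $m\le m'$ imply ${\rm A'}(m,k)\le{\rm A'}(m',k')$. (Q3'): $\forall n\ \beta_n\leq{\rm b}(n)$. (Q3): $\forall k\,\forall n\geq{\rm B}(k)\ \beta_n\geq k$. (Q4): $\forall k\,\forall n\ \sum_{i={\rm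 E}(k)+1}^{{\rm E}(k)+n}\|e_i\|\leq\frac{1}{k+1}$. Monotone means nondecreasing. $v^{(R)}$ is the $R$-fold composition of $v$ ($v^{(0)}$ the identity). $[a,b]$ is the set of naturals $m$ with $a\le m\le b$. *)

(* Defs.v *)
From Stdlib Require Import Reals Lra Lia Arith List.
Open Scope R_scope.

Record HilbertSpace := {
  hs_car :> Type;
  hs_zero : hs_car;
  hs_add : hs_car -> hs_car -> hs_car;
  hs_opp : hs_car -> hs_car;
  hs_scal : R -> hs_car -> hs_car;
  hs_inner : hs_car -> hs_car -> R;
  hs_add_assoc : forall x y z, hs_add x (hs_add y z) = hs_add (hs_add x y) z;
  hs_add_comm : forall x y, hs_add x y = hs_add y x;
  hs_add_zero : forall x, hs_add x hs_zero = x;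
  hs_add_opp : forall x, hs_add x (hs_opp x) = hs_zero;
  hs_scal_assoc : forall a b x, hs_scal a (hs_scal b x) = hs_scal (a * b) x;
  hs_scal_one : forall x, hs_scal 1 x = x;
  hs_scal_add_r : forall a x y, hs_scal a (hs_add x y) = hs_add (hs_scal a x) (hs_scal a y);
  hs_scal_add_l : forall a b x, hs_scal (a + b) x = hs_add (hs_scal a x) (hs_scal b x);
  hs_inner_sym : forall x y, hs_inner x y = hs_inner y x;
  hs_inner_add_l : forall x y z, hs_inner (hs_add x y) z = hs_inner x z + hs_inner y z;
  hs_inner_scal_l : forall a x y, hs_inner (hs_scal a x) y = a * hs_inner x y;
  hs_inner_pos : forall x, 0 <= hs_inner x x;
  hs_inner_def : forall x, hs_inner x x = 0 -> x = hs_zero;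
  hs_complete : forall u : nat -> hs_car,
    (forall eps, 0 < eps -> exists n0, forall m n, (n0 <= m)%nat -> (n0 <= n)%nat ->
        sqrt (hs_inner (hs_add (u m) (hs_opp (u n))) (hs_add (u m) (hs_opp (u n)))) < eps) ->
    exists l, forall eps, 0 < eps -> exists n0, forall n, (n0 <= n)%nat ->
        sqrt (hs_inner (hs_add (u n) (hs_opp l)) (hs_add (u n) (hs_opp l))) < eps
}.

Arguments hs_zero {h}. Arguments hs_add {h}. Arguments hs_opp {h}.
Arguments hs_scal {h}. Arguments hs_inner {h}.

Definition hs_sub {X : HilbertSpace} (x y : X) : X := hs_add x (hs_opp y).
Definition hs_norm {X : HilbertSpace} (x : X) : R := sqrt (hs_inner x x).

(* Set-valued operator A : X -> 2^X, encoded by its graph: A x u  <->  u \in A(x). *)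
Definition monotone_op {X : HilbertSpace} (A : X -> X -> Prop) : Prop :=
  forall x y u v, A x u -> A y v -> 0 <= hs_inner (hs_sub x y) (hs_sub u v).

Definition maximal_monotone {X : HilbertSpace} (A : X -> X -> Prop) : Prop :=
  monotone_op A /\
  forall x u, (forall y v, A y v -> 0 <= hs_inner (hs_sub x y) (hs_sub u v)) -> A x u.

(* J is the resolvent of A: for beta > 0, y = J beta x  iff  x \in y + beta A(y),
   i.e. (1/beta)(x - y) \in A(y).  (Single-valued by monotonicity.) *)
Definition is_resolvent {X : HilbertSpace} (A : X -> X -> Prop) (J : R -> X -> X) : Prop :=
  forall beta x, 0 < beta -> A (J beta x) (hs_scal (/ beta) (hs_sub x (J beta x))).

Fixpoint hppa {X : HilbertSpace} (J : R -> X -> X) (alpha beta : nat -> R)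
  (e : nat -> X) (x0 : X) (n : nat) : X :=
  match n with
  | O => x0
  | S m => hs_add (hs_scal (alpha m) x0)
             (hs_scal (1 - alpha m) (hs_add (J (beta m) (hppa J alpha beta e x0 m)) (e m)))
  end.

(* prod_{i=m}^{n} f i and sum_{i=m}^{n} f i (empty = 1 resp. 0 if n < m) *)
Definition rprod_range (f : nat -> R) (m n : nat) : R :=
  fold_right Rmult 1 (map f (seq m (S n - m))).
Definition rsum_range (f : nat -> R) (m n : nat) : R :=
  fold_right Rplus 0 (map f (seq m (S n - m))).

Definition nat_monotone (f : nat -> nat) : Prop := forall m n, (m <= n)%nat -> (f m <= f n)%nat.

(* Rates, all in nat arithmetic (truncated subtraction; all subtracted terms are >= 1
   under the hypotheses). *)
Open Scope nat_scope.

Definition Nbound (D Ec : nat) : nat := Nat.max (2 * D) (D + Ec).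

Definition sigma2 (A' : nat -> nat -> nat) (N k' n' : nat) : nat :=
  A' n' (16 * N ^ 2 * (k' + 1) - 1) + 1.

Definition xi (a E : nat -> nat) (D Ec k'' : nat) : nat :=
  Nat.max (a (2 * (2 * D + Ec) * (k'' + 1) - 1)) (E (2 * k'' + 1) + 1).

Definition chi1 (a B E : nat -> nat) (D Ec k'' : nat) : nat :=
  Nat.max (xi a E D Ec (4 * k'' + 3)) (B (8 * (D + Ec) * (k'' + 1) - 1)) + 1.

Definition wfun (v : nat -> nat) (N m : nat) : nat :=
  Nat.max (v (24 * N * (m + 1) ^ 2)) (24 * N * (m + 1) ^ 2).

Definition nu (b u : nat -> nat) (m : nat) : nat :=
  Nat.max 2 (b (u m)) * (u m + 1) - 1.

Definition Psi (a b B E : nat -> nat) (D Ec k' : nat) (u : nat -> nat) : nat :=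
  let N := Nbound D Ec in
  let R := 4 * N ^ 4 * (k' + 1) ^ 2 in
  let nuhat := fun m => nu b u (chi1 a B E D Ec m) in
  chi1 a B E D Ec (24 * N * (Nat.iter R (wfun nuhat N) 0 + 1) ^ 2).

Definition Phi2 (a b B E : nat -> nat) (A' : nat -> nat -> nat) (D Ec k : nat)
  (f : nat -> nat) : nat :=
  let N := Nbound D Ec in
  let ktilde := 4 * (k + 1) ^ 2 - 1 in
  let g := fun m => Nat.max m (E (16 * (1 + 4 * N) * (k + 1) ^ 2 - 1) + 1) in
  let hbar := fun m => (1 + 4 * N) * (16 * (k + 1) ^ 2 * (f (sigma2 A' N ktilde (g m)) + 1) + 1) - 1 in
  let Delta := Psi a b B E D Ec (32 * (k + 1) ^ 2 - 1) hbar in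
  sigma2 A' N ktilde (g Delta).

Close Scope nat_scope.

(* Main.v *)
Require Import Defs.
From Stdlib Require Import Reals Lra Lia Arith List.
From Stdlib Require Import Classical_Prop.
Open Scope R_scope.



Lemma inner_add_r {X : HilbertSpace} (x y z : X) :
  hs_inner x (hs_add y z) = hs_inner x y + hs_inner x z.
Proof. rewrite hs_inner_sym, hs_inner_add_l, (hs_inner_sym _ y), (hs_inner_sym _ z). ring. Qed.

Lemma inner_scal_r {X : HilbertSpace} a (x y : X) :
  hs_inner x (hs_scal a y) = a * hs_inner x y.
Proof. rewrite hs_inner_sym, hs_inner_scal_l, (hs_inner_sym _ y). ring. Qed.

Lemma inner_zero_l {X : HilbertSpace} (y : X) : hs_inner hs_zero y = 0.
Proof.
  assert (H := hs_inner_add_l X hs_zero hs_zero y).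
  rewrite hs_add_zero in H. lra.
Qed.

Lemma inner_zero_r {X : HilbertSpace} (y : X) : hs_inner y hs_zero = 0.
Proof. rewrite hs_inner_sym. apply inner_zero_l. Qed.

Lemma inner_opp_l {X : HilbertSpace} (x y : X) : hs_inner (hs_opp x) y = - hs_inner x y.
Proof.
  assert (H := hs_inner_add_l X x (hs_opp x) y).
  rewrite hs_add_opp, inner_zero_l in H. lra.
Qed.

Lemma inner_opp_r {X : HilbertSpace} (x y : X) : hs_inner x (hs_opp y) = - hs_inner x y.
Proof. rewrite hs_inner_sym, inner_opp_l, hs_inner_sym. ring. Qed.

Ltac iexp := unfold hs_sub, hs_norm in *;
  repeat (rewrite ?hs_inner_add_l, ?inner_add_r, ?hs_inner_scal_l, ?inner_scal_r,
     ?inner_opp_l, ?inner_opp_r, ?inner_zero_l, ?inner_zero_r).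

Lemma sub_eq0 {X : HilbertSpace} (u v : X) : hs_inner (hs_sub u v) (hs_sub u v) = 0 -> u = v.
Proof.
  intro H. apply hs_inner_def in H. unfold hs_sub in H.
  rewrite <- (hs_add_zero X v), <- H.
  rewrite (hs_add_comm X u), hs_add_assoc, hs_add_opp, hs_add_comm, hs_add_zero. reflexivity.
Qed.

Ltac isym := repeat match goal with |- context [hs_inner ?a ?b] =>
    match goal with |- context [hs_inner b a] =>
      assert_fails (constr_eq a b); rewrite (hs_inner_sym _ b a) end end.

Ltac veq := apply sub_eq0; iexp; isym; first [ring | field | (unfold Rdiv; ring)].

Lemma norm_nonneg {X : HilbertSpace} (x : X) : 0 <= hs_norm x.
Proof. apply sqrt_pos. Qed.

Lemma norm_sq {X : HilbertSpace} (x : X) : hs_norm x * hs_norm x = hs_inner x x.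
Proof. apply sqrt_sqrt, hs_inner_pos. Qed.

Lemma norm_le_sq {X : HilbertSpace} (x : X) c : 0 <= c -> hs_inner x x <= c * c -> hs_norm x <= c.
Proof.
  intros Hc H. unfold hs_norm. rewrite <- (sqrt_square c) by lra. apply sqrt_le_1_alt. exact H.
Qed.

Lemma cauchy_schwarz {X : HilbertSpace} (x y : X) : hs_inner x y <= hs_norm x * hs_norm y.
Proof.
  assert (Hx := norm_nonneg x). assert (Hy := norm_nonneg y).
  assert (Hxx := norm_sq x). assert (Hyy := norm_sq y).
  destruct (Req_dec (hs_inner y y) 0) as [H0|H0].
  - apply hs_inner_def in H0. subst y. rewrite inner_zero_r. nra.
  - set (t := hs_inner x y / hs_inner y y).
    assert (Hp := hs_inner_pos X (hs_sub x (hs_scal t y))).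
    iexp. try rewrite (hs_inner_sym _ y x) in Hp.
    assert (Hyp : 0 < hs_inner y y) by (pose proof (hs_inner_pos X y); lra).
    assert (Hq : hs_inner x y * hs_inner x y <= hs_inner x x * hs_inner y y).
    { assert (Ht : t * hs_inner y y = hs_inner x y) by (unfold t; field; lra).
      unfold hs_sub in Hp; repeat (rewrite ?hs_inner_add_l, ?inner_add_r, ?hs_inner_scal_l, ?inner_scal_r,
     ?inner_opp_l, ?inner_opp_r in Hp).
      rewrite (hs_inner_sym _ y x) in Hp.
      assert (0 <= hs_inner y y * (hs_inner x x - t * hs_inner x y - t * hs_inner x y + t * (t * hs_inner y y))) by (apply Rmult_le_pos; lra).
      rewrite Ht in H. nra. }
    unfold hs_norm in *.
    rewrite <- Hxx, <- Hyy in Hq.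
    destruct (Rle_dec (hs_inner x y) 0). { apply Rle_trans with 0; [lra| apply Rmult_le_pos; lra]. }
    apply Rsqr_incr_0_var; unfold Rsqr; [nra|]. apply Rmult_le_pos; lra.
Qed.

Lemma norm_triangle {X : HilbertSpace} (x y : X) : hs_norm (hs_add x y) <= hs_norm x + hs_norm y.
Proof.
  apply norm_le_sq. { pose proof (norm_nonneg x); pose proof (norm_nonneg y); lra. }
  assert (H := cauchy_schwarz x y). pose proof (norm_sq x); pose proof (norm_sq y).
  iexp. rewrite (hs_inner_sym _ y x). unfold hs_norm in *. nra.
Qed.

Lemma norm_scal {X : HilbertSpace} a (x : X) : hs_norm (hs_scal a x) = Rabs a * hs_norm x.
Proof.
  unfold hs_norm. rewrite hs_inner_scal_l, inner_scal_r, <- Rmult_assoc, sqrt_mult_alt.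
  - f_equal. rewrite <- (sqrt_Rsqr_abs a). unfold Rsqr. reflexivity.
  - apply Rle_0_sqr.
Qed.

Lemma norm_opp {X : HilbertSpace} (x : X) : hs_norm (hs_opp x) = hs_norm x.
Proof. unfold hs_norm. rewrite inner_opp_l, inner_opp_r. f_equal. ring. Qed.

Lemma norm_sub_sym {X : HilbertSpace} (x y : X) : hs_norm (hs_sub x y) = hs_norm (hs_sub y x).
Proof. unfold hs_norm. f_equal. iexp. rewrite (hs_inner_sym _ y x). ring. Qed.

Lemma norm_sub_tri {X : HilbertSpace} (x y z : X) :
  hs_norm (hs_sub x z) <= hs_norm (hs_sub x y) + hs_norm (hs_sub y z).
Proof.
  replace (hs_sub x z) with (hs_add (hs_sub x y) (hs_sub y z)) by veq.
  apply norm_triangle.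
Qed.

Lemma norm_zero {X : HilbertSpace} : hs_norm (@hs_zero X) = 0.
Proof. unfold hs_norm. rewrite inner_zero_l. apply sqrt_0. Qed.

Lemma norm_sub_self {X : HilbertSpace} (x : X) : hs_norm (hs_sub x x) = 0.
Proof. unfold hs_sub. rewrite hs_add_opp. apply norm_zero. Qed.

Lemma norm_eq0 {X : HilbertSpace} (x y : X) : hs_norm (hs_sub x y) <= 0 -> x = y.
Proof.
  intro H. apply sub_eq0. pose proof (norm_nonneg (hs_sub x y)).
  rewrite <- norm_sq. nra.
Qed.

Lemma res_fix {X : HilbertSpace} (A : X -> X -> Prop) J :
  monotone_op A -> is_resolvent A J ->
  forall beta y v, 0 < beta -> A y v -> J beta (hs_add y (hs_scal beta v)) = y.
Proof.
  intros mm res beta y v Hb Hv.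
  set (w := J beta (hs_add y (hs_scal beta v))).
  assert (Hw := res beta (hs_add y (hs_scal beta v)) Hb). fold w in Hw.
  assert (H := mm _ _ _ _ Hw Hv).
  apply sub_eq0.
  assert (Heq : hs_inner (hs_sub w y) (hs_sub (hs_scal (/ beta) (hs_sub (hs_add y (hs_scal beta v)) w)) v)
     = - / beta * hs_inner (hs_sub w y) (hs_sub w y)).
  { iexp. isym. field. lra. }
  rewrite Heq in H.
  pose proof (hs_inner_pos X (hs_sub w y)).
  assert (0 < / beta) by (apply Rinv_0_lt_compat; lra).
  nra.
Qed.

Lemma res_nonexp {X : HilbertSpace} (A : X -> X -> Prop) J :
  monotone_op A -> is_resolvent A J ->
  forall beta x y, 0 < beta -> hs_norm (hs_sub (J beta x) (J beta y)) <= hs_norm (hs_sub x y).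
Proof.
  intros mm res beta x y Hb.
  assert (H := mm _ _ _ _ (res beta x Hb) (res beta y Hb)).
  set (u := J beta x) in *. set (w := J beta y) in *.
  assert (Heq : hs_inner (hs_sub u w) (hs_sub (hs_scal (/ beta) (hs_sub x u)) (hs_scal (/ beta) (hs_sub y w)))
    = / beta * (hs_inner (hs_sub u w) (hs_sub x y) - hs_inner (hs_sub u w) (hs_sub u w))).
  { iexp. isym. field. lra. }
  rewrite Heq in H.
  assert (0 < / beta) by (apply Rinv_0_lt_compat; lra).
  assert (H2 : hs_inner (hs_sub u w) (hs_sub u w) <= hs_inner (hs_sub u w) (hs_sub x y)).
  { apply Rmult_le_reg_l with (/ beta); lra. }
  pose proof (cauchy_schwarz (hs_sub u w) (hs_sub x y)).
  rewrite <- norm_sq in H2.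
  pose proof (norm_nonneg (hs_sub u w)). pose proof (norm_nonneg (hs_sub x y)).
  nra.
Qed.

Lemma res_ident {X : HilbertSpace} (A : X -> X -> Prop) J :
  monotone_op A -> is_resolvent A J ->
  forall lam mu x, 0 < lam -> 0 < mu ->
  J lam (hs_add (hs_scal (lam / mu) x) (hs_scal (1 - lam / mu) (J mu x))) = J mu x.
Proof.
  intros mm res lam mu x Hl Hm.
  assert (Hv := res mu x Hm).
  rewrite <- (res_fix A J mm res lam _ _ Hl Hv) at 2.
  f_equal. apply sub_eq0. iexp. isym. field. lra.
Qed.

Lemma res_compare {X : HilbertSpace} (A : X -> X -> Prop) J :
  monotone_op A -> is_resolvent A J ->
  forall beta z, 0 < beta ->
  hs_norm (hs_sub (J beta z) z) <= Rmax 2 beta * hs_norm (hs_sub (J 1 z) z).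
Proof.
  intros mm res beta z Hb.
  pose proof (norm_nonneg (hs_sub (J 1 z) z)) as H1.
  pose proof (norm_nonneg (hs_sub (J beta z) z)) as H2.
  destruct (Rle_dec 1 beta) as [Hge|Hlt].
  - assert (Hid := res_ident A J mm res 1 beta z Rlt_0_1 Hb).
    assert (Hn := res_nonexp A J mm res 1 (hs_add (hs_scal (1 / beta) z) (hs_scal (1 - 1 / beta) (J beta z))) z Rlt_0_1).
    rewrite Hid in Hn.
    replace (hs_sub (hs_add (hs_scal (1 / beta) z) (hs_scal (1 - 1 / beta) (J beta z))) z)
      with (hs_scal (1 - 1/beta) (hs_sub (J beta z) z)) in Hn by veq.
    rewrite norm_scal in Hn.
    assert (0 <= 1 - 1/beta) by (unfold Rdiv; rewrite Rmult_1_l;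
       assert (/ beta <= 1) by (rewrite <- Rinv_1; apply Rinv_le_contravar; lra); lra).
    rewrite Rabs_pos_eq in Hn by lra.
    pose proof (norm_sub_tri (J beta z) (J 1 z) z).
    assert (Hk : 1/beta * hs_norm (hs_sub (J beta z) z) <= hs_norm (hs_sub (J 1 z) z)) by lra.
    assert (Hk2 : hs_norm (hs_sub (J beta z) z) <= beta * hs_norm (hs_sub (J 1 z) z)).
    { apply Rmult_le_compat_l with (r := beta) in Hk; [|lra].
      replace (beta * (1 / beta * hs_norm (hs_sub (J beta z) z))) with (hs_norm (hs_sub (J beta z) z)) in Hk
        by (field; lra). exact Hk. }
    apply Rle_trans with (1 := Hk2). apply Rmult_le_compat_r; [lra|]. apply Rmax_r.
  - assert (Hid := res_ident A J mm res beta 1 z Hb Rlt_0_1).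
    assert (Hn := res_nonexp A J mm res beta (hs_add (hs_scal (beta / 1) z) (hs_scal (1 - beta / 1) (J 1 z))) z Hb).
    rewrite Hid in Hn.
    replace (hs_sub (hs_add (hs_scal (beta / 1) z) (hs_scal (1 - beta / 1) (J 1 z))) z)
      with (hs_scal (1 - beta) (hs_sub (J 1 z) z)) in Hn by veq.
    rewrite norm_scal, Rabs_pos_eq in Hn by lra.
    pose proof (norm_sub_tri (J beta z) (J 1 z) z).
    rewrite norm_sub_sym in Hn.
    apply Rle_trans with (2 * hs_norm (hs_sub (J 1 z) z)); [nra|].
    apply Rmult_le_compat_r; [lra|]. apply Rmax_l.
Qed.

Lemma res_zero {X : HilbertSpace} (A : X -> X -> Prop) J :
  monotone_op A -> is_resolvent A J ->
  forall beta p, 0 < beta -> A p hs_zero -> J beta p = p.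
Proof.
  intros mm res beta p Hb Hp.
  rewrite <- (res_fix A J mm res beta p hs_zero Hb Hp) at 2.
  f_equal. veq.
Qed.

Fixpoint psf (f : nat -> R) (a n : nat) : R :=
  match n with O => 0 | S n => f a + psf f (S a) n end.
Fixpoint ppf (f : nat -> R) (a n : nat) : R :=
  match n with O => 1 | S n => f a * ppf f (S a) n end.

Lemma fold_psf f a n : fold_right Rplus 0 (map f (seq a n)) = psf f a n.
Proof. revert a; induction n; intros a; simpl; [reflexivity| rewrite IHn; reflexivity]. Qed.
Lemma fold_ppf f a n : fold_right Rmult 1 (map f (seq a n)) = ppf f a n.
Proof. revert a; induction n; intros a; simpl; [reflexivity| rewrite IHn; reflexivity]. Qed.

Lemma psf_split f a n m : psf f a (n + m) = psf f a n + psf f (a + n) m.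
Proof.
  revert a; induction n; intros a; simpl.
  - rewrite Nat.add_0_r. ring.
  - rewrite IHn. replace (S a + n)%nat with (a + S n)%nat by lia. ring.
Qed.
Lemma ppf_split f a n m : ppf f a (n + m) = ppf f a n * ppf f (a + n) m.
Proof.
  revert a; induction n; intros a; simpl.
  - rewrite Nat.add_0_r. ring.
  - rewrite IHn. replace (S a + n)%nat with (a + S n)%nat by lia. ring.
Qed.

Lemma psf_nonneg f a n : (forall i, 0 <= f i) -> 0 <= psf f a n.
Proof. intro H; revert a; induction n; intros a; simpl; [lra|]. specialize (IHn (S a)). specialize (H a). lra. Qed.

Lemma ppf_bounds f a n : (forall i, 0 <= f i <= 1) -> 0 <= ppf f a n <= 1.
Proof. intro H; revert a; induction n; intros a; simpl; [lra|]. specialize (IHn (S a)). specialize (H a). nra. Qed.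

Lemma psf_sub f a n a' n' : (forall i, 0 <= f i) -> (a <= a')%nat -> (a' + n' <= a + n)%nat ->
  psf f a' n' <= psf f a n.
Proof.
  intros H h1 h2.
  replace n with ((a' - a) + (n' + (a + n - (a' + n'))))%nat by lia.
  rewrite psf_split, psf_split.
  replace (a + (a' - a))%nat with a' by lia.
  pose proof (psf_nonneg f a (a' - a) H). pose proof (psf_nonneg f (a' + n') (a + n - (a' + n')) H). lra.
Qed.

Lemma ppf_sub f a n n' : (forall i, 0 <= f i <= 1) -> (n' <= n)%nat -> ppf f a n <= ppf f a n'.
Proof.
  intros H h. replace n with (n' + (n - n'))%nat by lia. rewrite ppf_split.
  pose proof (ppf_bounds f a n' H). pose proof (ppf_bounds f (a + n') (n - n') H). nra.
Qed.

Lemma sum_f_R0_psf f N : sum_f_R0 f N = psf f 0 (S N).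
Proof.
  induction N; [simpl; ring|]. change (sum_f_R0 f (S N)) with (sum_f_R0 f N + f (S N)).
  rewrite IHN. replace (S (S N)) with (S N + 1)%nat by lia.
  rewrite psf_split. simpl. ring.
Qed.

Lemma INR_pred m : (1 <= m)%nat -> INR (m - 1) + 1 = INR m.
Proof. intro h. replace m with (S (m - 1)) at 2 by lia. rewrite S_INR. reflexivity. Qed.

Lemma INR1 : INR 1 = 1. Proof. reflexivity. Qed.
Lemma INR2 : INR 2 = 2. Proof. simpl; ring. Qed.
Lemma INR3 : INR 3 = 3. Proof. simpl; ring. Qed.
Lemma INR4 : INR 4 = 4. Proof. simpl; ring. Qed.
Lemma INR8 : INR 8 = 8. Proof. simpl; ring. Qed.
Lemma INR16 : INR 16 = 16. Proof. simpl; ring. Qed.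
Lemma INR24 : INR 24 = 24. Proof. simpl; ring. Qed.
Lemma INR32 : INR 32 = 32. Proof. simpl; ring. Qed.
Ltac inrs := repeat first [rewrite mult_INR | rewrite plus_INR | rewrite pow_INR]; rewrite ?INR1, ?INR2, ?INR3, ?INR4, ?INR8, ?INR16, ?INR24, ?INR32.
Ltac inrs_in H := repeat first [rewrite mult_INR in H | rewrite plus_INR in H | rewrite pow_INR in H]; rewrite ?INR1, ?INR2, ?INR3, ?INR4, ?INR8, ?INR16, ?INR24, ?INR32 in H.

Lemma norm_convex {X : HilbertSpace} (t : R) (u v : X) : 0 <= t <= 1 ->
  hs_norm (hs_add (hs_scal t u) (hs_scal (1 - t) v)) <= t * hs_norm u + (1 - t) * hs_norm v.
Proof.
  intro Ht. eapply Rle_trans; [apply norm_triangle|].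
  rewrite !norm_scal, !Rabs_pos_eq by lra. lra.
Qed.

Lemma psf_plus f g a n : psf (fun i => f i + g i) a n = psf f a n + psf g a n.
Proof. revert a; induction n; intros a; simpl; [ring| rewrite IHn; ring]. Qed.

Lemma psf_const f a n c : (forall i, (a <= i < a + n)%nat -> f i <= c) -> psf f a n <= INR n * c.
Proof.
  revert a; induction n; intros a h; simpl psf; [simpl; lra|].
  rewrite S_INR. specialize (IHn (S a) ltac:(intros i hi; apply h; lia)). specialize (h a ltac:(lia)). lra.
Qed.

Lemma xu_unroll (s al c : nat -> R) (rho K : R) m0 L :
  (forall i, 0 <= al i <= 1) -> 0 <= rho -> 0 <= K -> (forall i, 0 <= c i) ->
  (forall i, (m0 <= i < m0 + L)%nat -> s (S i) <= (1 - al i) * s i + al i * rho + K * c i) ->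
  forall len, (len <= L)%nat ->
  s (m0 + len)%nat <= ppf (fun i => 1 - al i) m0 len * s m0 + rho + K * psf c m0 len.
Proof.
  intros hal hr hK hc hs. induction len; intro hl.
  - simpl. rewrite Nat.add_0_r. lra.
  - specialize (IHlen ltac:(lia)).
    replace (m0 + S len)%nat with (S (m0 + len)) by lia.
    replace (S len) with (len + 1)%nat by lia.
    rewrite ppf_split, psf_split. simpl ppf. simpl psf.
    specialize (hs (m0 + len)%nat ltac:(lia)).
    pose proof (hal (m0 + len)%nat). pose proof (hc (m0 + len)%nat).
    pose proof (psf_nonneg c m0 len hc).
    assert ((1 - al (m0 + len)%nat) * s (m0 + len)%nat <=
      (1 - al (m0 + len)%nat) * (ppf (fun i => 1 - al i) m0 len * s m0 + rho + K * psf c m0 len))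
      by (apply Rmult_le_compat_l; lra).
    assert (0 <= K * psf c m0 len) by (apply Rmult_le_pos; lra).
    nra.
Qed.

Section Main.
Variable X : HilbertSpace.
Variable A : X -> X -> Prop.
Variable J : R -> X -> X.
Variables (alpha beta : nat -> R) (e : nat -> X) (x0 : X).
Variables (a b B E : nat -> nat) (A' : nat -> nat -> nat) (D Ec : nat) (p : X).
Hypothesis mm : monotone_op A.
Hypothesis res : is_resolvent A J.
Hypothesis Halpha : forall n, 0 < alpha n < 1.
Hypothesis Hbeta : forall n, 0 < beta n.
Hypothesis Ha : nat_monotone a.
Hypothesis Hb : nat_monotone b.
Hypothesis HB : nat_monotone B.
Hypothesis HE : nat_monotone E.
Hypothesis HA' : forall m m' k k', (k <= k')%nat -> (m <= m')%nat -> (A' m k <= A' m' k')%nat.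
Hypothesis Q1 : forall k n, (a k <= n)%nat -> alpha n <= 1 / (INR k + 1).
Hypothesis Q2 : forall k m, rprod_range (fun i => 1 - alpha i) m (A' m k) <= 1 / (INR k + 1).
Hypothesis Q3' : forall n, beta n <= INR (b n).
Hypothesis Q3 : forall k n, (B k <= n)%nat -> INR k <= beta n.
Hypothesis Q4 : forall k n, rsum_range (fun i => hs_norm (e i)) (E k + 1) (E k + n) <= 1 / (INR k + 1).
Hypothesis HEc : INR Ec >= 1 + sum_f_R0 (fun i => hs_norm (e i)) (E 0%nat).
Hypothesis Hp : A p hs_zero.
Hypothesis HD : INR D >= hs_norm (hs_sub x0 p).

Let xs := hppa J alpha beta e x0.
Let en := fun i => hs_norm (e i).

Lemma en_nonneg i : 0 <= en i.
Proof. apply norm_nonneg. Qed.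

Lemma e_tail K m0 len : (E K + 1 <= m0)%nat -> psf en m0 len <= 1 / (INR K + 1).
Proof.
  intro h. eapply Rle_trans; [| apply (Q4 K (m0 - (E K + 1) + len))].
  unfold rsum_range. rewrite fold_psf. apply psf_sub; [apply en_nonneg| lia | lia].
Qed.

Lemma e_single K n : (E K + 1 <= n)%nat -> en n <= 1 / (INR K + 1).
Proof. intro h. pose proof (e_tail K n 1 h). simpl in H. lra. Qed.

Lemma Ec_ge1 : 1 <= INR Ec.
Proof. pose proof (psf_nonneg en 0 (S (E 0%nat)) en_nonneg). rewrite <- sum_f_R0_psf in H. unfold en in H. lra. Qed.

Lemma e_total n : psf en 0 n <= INR Ec.
Proof.
  apply Rle_trans with (psf en 0 (S (E 0%nat) + n)).
  { apply psf_sub; [apply en_nonneg| lia| lia]. }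
  rewrite psf_split, <- sum_f_R0_psf. simpl Nat.add.
  pose proof (e_tail 0 (S (E 0%nat)) n ltac:(lia)). simpl INR in H.
  unfold en in *. lra.
Qed.

Lemma J_p bt : 0 < bt -> J bt p = p.
Proof. intro h. apply (res_zero A J mm res bt p h Hp). Qed.

Lemma J_ne bt u v : 0 < bt -> hs_norm (hs_sub (J bt u) (J bt v)) <= hs_norm (hs_sub u v).
Proof. intro h. apply (res_nonexp A J mm res bt u v h). Qed.

Lemma xs_S n : xs (S n) = hs_add (hs_scal (alpha n) x0)
   (hs_scal (1 - alpha n) (hs_add (J (beta n) (xs n)) (e n))).
Proof. reflexivity. Qed.

Lemma xs_bound_aux n : hs_norm (hs_sub (xs n) p) <= INR D + psf en 0 n.
Proof.
  induction n.
  - change (xs 0) with x0. simpl psf. lra.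
  - rewrite xs_S.
    replace (hs_sub (hs_add (hs_scal (alpha n) x0) (hs_scal (1 - alpha n) (hs_add (J (beta n) (xs n)) (e n)))) p)
      with (hs_add (hs_scal (alpha n) (hs_sub x0 p)) (hs_scal (1 - alpha n) (hs_add (hs_sub (J (beta n) (xs n)) (J (beta n) p)) (e n)))).
    2:{ rewrite (J_p (beta n) (Hbeta n)). veq. }
    eapply Rle_trans; [apply norm_convex; specialize (Halpha n); lra|].
    pose proof (norm_triangle (hs_sub (J (beta n) (xs n)) (J (beta n) p)) (e n)).
    pose proof (J_ne (beta n) (xs n) p (Hbeta n)).
    replace (S n) with (n + 1)%nat by lia. rewrite psf_split. simpl.
    pose proof (psf_nonneg en 0 n en_nonneg). specialize (Halpha n). unfold en in *.
    pose proof (norm_nonneg (e n)).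
    assert (alpha n * hs_norm (hs_sub x0 p) <= alpha n * INR D) by (apply Rmult_le_compat_l; lra).
    assert ((1 - alpha n) * hs_norm (hs_add (hs_sub (J (beta n) (xs n)) (J (beta n) p)) (e n))
      <= (1 - alpha n) * (INR D + psf (fun i : nat => hs_norm (e i)) 0 n + hs_norm (e n))) by (apply Rmult_le_compat_l; lra).
    nra.
Qed.

Lemma xs_bound n : hs_norm (hs_sub (xs n) p) <= INR D + INR Ec.
Proof. pose proof (xs_bound_aux n). pose proof (e_total n). lra. Qed.


Lemma Ec_pos : (1 <= Ec)%nat.
Proof. pose proof Ec_ge1. destruct Ec; [simpl in H; lra| lia]. Qed.

Lemma mul_le_inv x c d : 0 < c -> 0 < d -> x <= 1 / (c * d) -> x * c <= 1 / d.
Proof.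
  intros hc hd h. apply Rmult_le_compat_r with (r := c) in h; [|lra].
  replace (1 / (c * d) * c) with (1 / d) in h by (field; lra). exact h.
Qed.

Lemma xi_step K n : (xi a E D Ec K <= n)%nat ->
  hs_norm (hs_sub (xs (S n)) (J (beta n) (xs n))) <= 1 / (INR K + 1).
Proof.
  intro h. unfold xi in h.
  assert (hal := Q1 (2 * (2 * D + Ec) * (K + 1) - 1) n ltac:(lia)).
  rewrite INR_pred in hal by (pose proof Ec_pos; lia).
  inrs_in hal.
  assert (hen := e_single (2 * K + 1) n ltac:(lia)).
  inrs_in hen.
  rewrite xs_S.
  replace (hs_sub (hs_add (hs_scal (alpha n) x0) (hs_scal (1 - alpha n) (hs_add (J (beta n) (xs n)) (e n)))) (J (beta n) (xs n)))
    with (hs_add (hs_scal (alpha n) (hs_sub x0 (J (beta n) (xs n)))) (hs_scal (1 - alpha n) (e n))) by veq.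
  pose proof (Halpha n) as Han.
  eapply Rle_trans; [apply norm_convex; lra|].
  pose proof (norm_sub_tri x0 p (J (beta n) (xs n))).
  pose proof (J_ne (beta n) p (xs n) (Hbeta n)). rewrite (J_p _ (Hbeta n)) in H0.
  rewrite (norm_sub_sym p (xs n)) in H0. pose proof (xs_bound n).
  pose proof (pos_INR D). pose proof Ec_ge1. pose proof (pos_INR K).
  assert (hc : alpha n * (2 * INR D + INR Ec) <= 1 / (2 * (INR K + 1))).
  { apply mul_le_inv; try lra.
    replace ((2 * INR D + INR Ec) * (2 * (INR K + 1))) with (2 * (2 * INR D + INR Ec) * (INR K + 1)) by ring.
    exact hal. }
  assert (alpha n * hs_norm (hs_sub x0 (J (beta n) (xs n))) <= alpha n * (2 * INR D + INR Ec))
    by (apply Rmult_le_compat_l; lra).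
  pose proof (norm_nonneg (e n)).
  replace (1 / (INR K + 1)) with (1 / (2 * (INR K + 1)) + 1 / (2 * INR K + 1 + 1)) by (field; lra).
  unfold en in hen. nra.
Qed.

Lemma chi1_step K j : (chi1 a B E D Ec K <= j)%nat ->
  hs_norm (hs_sub (xs j) (J 1 (xs j))) <= 1 / (INR K + 1).
Proof.
  intro h. unfold chi1 in h. destruct j as [|n]; [lia|].
  assert (hx := xi_step (4 * K + 3) n ltac:(lia)).
  assert (hb := Q3 (8 * (D + Ec) * (K + 1) - 1) n ltac:(lia)).
  rewrite minus_INR in hb by (pose proof Ec_pos; lia).
  inrs_in hb. inrs_in hx.
  set (bt := beta n) in *. set (z := J bt (xs n)) in *.
  set (v := hs_scal (/ bt) (hs_sub (xs n) z)).
  assert (Hv : A z v) by (apply res; apply Hbeta).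
  assert (Hfix : J 1 (hs_add z v) = z).
  { rewrite <- (hs_scal_one X v) at 1. apply (res_fix A J mm res 1 z v Rlt_0_1 Hv). }
  pose proof (pos_INR D). pose proof Ec_ge1. pose proof (pos_INR K).
  assert (hbt : 0 < bt) by (apply Hbeta).
  assert (hnv : hs_norm v <= 1 / (2 * (INR K + 1))).
  { unfold v. rewrite norm_scal, Rabs_pos_eq by (apply Rlt_le, Rinv_0_lt_compat; lra).
    pose proof (norm_sub_tri (xs n) p z).
    pose proof (J_ne bt p (xs n) hbt). rewrite (J_p _ hbt) in H3. fold z in H3.
    rewrite (norm_sub_sym p (xs n)) in H3.
    pose proof (xs_bound n).
    assert (hd : hs_norm (hs_sub (xs n) z) <= 2 * (INR D + INR Ec)) by lra.
    apply Rle_trans with (/ bt * (2 * (INR D + INR Ec))).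
    { apply Rmult_le_compat_l; [apply Rlt_le, Rinv_0_lt_compat; lra| exact hd]. }
    apply Rmult_le_reg_l with bt; [lra|]. rewrite <- Rmult_assoc, Rinv_r by lra.
    apply Rmult_le_reg_l with (2 * (INR K + 1)); [lra|].
    replace (2 * (INR K + 1) * (bt * (1 / (2 * (INR K + 1))))) with bt by (field; lra).
    nra. }
  pose proof (norm_sub_tri (xs (S n)) z (J 1 (xs (S n)))).
  pose proof (J_ne 1 (hs_add z v) (xs (S n)) Rlt_0_1). rewrite Hfix in H3.
  replace (hs_sub (hs_add z v) (xs (S n))) with (hs_add (hs_sub z (xs (S n))) v) in H3 by veq.
  pose proof (norm_triangle (hs_sub z (xs (S n))) v).
  rewrite (norm_sub_sym z (xs (S n))) in H4.
  replace (1 / (INR K + 1)) with (2 * (1 / (4 * INR K + 3 + 1)) + 1 / (2 * (INR K + 1))) by (field; lra).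
  lra.
Qed.


Definition Kset m y := hs_norm (hs_sub y p) <= INR D + INR Ec /\ hs_norm (hs_sub y (J 1 y)) <= 1 / (INR m + 1).
Definition sqd y := hs_inner (hs_sub x0 y) (hs_sub x0 y).
Definition Eset m := fun t => exists y, Kset m y /\ t = - sqd y.

Lemma Eset_bound m : bound (Eset m).
Proof. exists 0. intros t [y [_ ->]]. unfold sqd. pose proof (hs_inner_pos X (hs_sub x0 y)). lra. Qed.

Lemma Kset_p m : Kset m p.
Proof.
  split; rewrite ?(J_p 1 Rlt_0_1), norm_sub_self; pose proof (pos_INR D); pose proof (pos_INR Ec);
  pose proof (pos_INR m); [lra|]. apply Rlt_le. apply Rdiv_lt_0_compat; lra.
Qed.

Lemma Eset_ne m : exists t, Eset m t.
Proof. exists (- sqd p). exists p. split; [apply Kset_p| reflexivity]. Qed.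

Definition dlev m := - proj1_sig (completeness (Eset m) (Eset_bound m) (Eset_ne m)).

Lemma dlev_le m y : Kset m y -> dlev m <= sqd y.
Proof.
  intro hy. unfold dlev. destruct (completeness (Eset m) (Eset_bound m) (Eset_ne m)) as [l [hl1 hl2]]. simpl.
  assert (- sqd y <= l) by (apply hl1; exists y; split; auto). lra.
Qed.

Lemma dlev_approx m eta : 0 < eta -> exists y, Kset m y /\ sqd y <= dlev m + eta.
Proof.
  intro he. unfold dlev. destruct (completeness (Eset m) (Eset_bound m) (Eset_ne m)) as [l [hl1 hl2]]. simpl.
  destruct (Classical_Prop.classic (exists y, Kset m y /\ sqd y <= - l + eta)) as [H|H]; [exact H|].
  exfalso. assert (hub : is_upper_bound (Eset m) (l - eta)).
  { intros t [y [hy ->]]. destruct (Rle_dec (- sqd y) (l - eta)) as [?|hn]; [assumption|].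
    exfalso. apply H. exists y. split; [assumption| lra]. }
  specialize (hl2 _ hub). lra.
Qed.

Lemma dlev_nonneg m : 0 <= dlev m.
Proof.
  unfold dlev. destruct (completeness (Eset m) (Eset_bound m) (Eset_ne m)) as [l [hl1 hl2]]. simpl.
  assert (l <= 0). { apply hl2. intros t [y [_ ->]]. unfold sqd. pose proof (hs_inner_pos X (hs_sub x0 y)). lra. }
  lra.
Qed.

Lemma dlev_le_D m : dlev m <= INR D * INR D.
Proof.
  eapply Rle_trans; [apply (dlev_le m p (Kset_p m))|]. unfold sqd. rewrite <- norm_sq.
  pose proof (norm_nonneg (hs_sub x0 p)). apply Rmult_le_compat; lra.
Qed.

Lemma dlev_mono m m' : (m <= m')%nat -> dlev m <= dlev m'.
Proof.
  intro h. destruct (Rle_dec (dlev m) (dlev m')) as [?|hn]; [assumption|].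
  destruct (dlev_approx m' ((dlev m - dlev m') / 2) ltac:(lra)) as [y [[hy1 hy2] hy]].
  assert (Kset m y).
  { split; [assumption|]. eapply Rle_trans; [exact hy2|].
    apply Rmult_le_compat_l; [lra|]. apply Rinv_le_contravar; [pose proof (pos_INR m); lra|].
    apply le_INR in h. lra. }
  pose proof (dlev_le m y H). lra.
Qed.


Lemma le_div1 x c : 0 < c -> x * c <= 1 -> x <= 1 / c.
Proof. intros hc h. apply Rmult_le_reg_r with c; [lra|]. replace (1 / c * c) with 1 by (field; lra). lra. Qed.

Lemma N_facts : 2 * INR D <= INR (Defs.Nbound D Ec) /\ INR D + INR Ec <= INR (Defs.Nbound D Ec) /\ 1 <= INR (Defs.Nbound D Ec).
Proof.
  unfold Defs.Nbound. pose proof (Nat.le_max_l (2 * D) (D + Ec)). pose proof (Nat.le_max_r (2 * D) (D + Ec)).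
  apply le_INR in H, H0. rewrite mult_INR, INR2 in H. rewrite plus_INR in H0. pose proof Ec_ge1. pose proof (pos_INR D).
  repeat split; lra.
Qed.

Lemma comb_in_K n m' z y t :
  (24 * Defs.Nbound D Ec * (n + 1) ^ 2 <= m')%nat -> Kset m' z ->
  hs_norm (hs_sub y p) <= INR D + INR Ec ->
  hs_norm (hs_sub y (J 1 y)) <= 1 / (INR (24 * Defs.Nbound D Ec * (n + 1) ^ 2)%nat + 1) ->
  0 <= t <= 1 ->
  Kset n (hs_add (hs_scal (1 - t) z) (hs_scal t y)).
Proof.
  intros hm [hz1 hz2] hy1 hy2 ht.
  set (w := hs_add (hs_scal (1 - t) z) (hs_scal t y)).
  destruct N_facts as [hN1 [hN2 hN3]].
  set (Nr := INR (Defs.Nbound D Ec)) in *.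
  split.
  - replace (hs_sub w p) with (hs_add (hs_scal (1 - t) (hs_sub z p)) (hs_scal t (hs_sub y p))) by (unfold w; veq).
    eapply Rle_trans; [apply norm_triangle|]. rewrite !norm_scal, !Rabs_pos_eq by lra. nra.
  - set (Lr := INR (24 * Defs.Nbound D Ec * (n + 1) ^ 2)%nat) in *.
    assert (hL : Lr = 24 * Nr * ((INR n + 1) * (INR n + 1))) by (unfold Lr, Nr; inrs; ring).
    set (dl := 1 / (Lr + 1)).
    assert (hLpos : 0 <= Lr) by (unfold Lr; apply pos_INR).
    assert (hdl : 0 < dl) by (unfold dl; apply Rdiv_lt_0_compat; lra).
    assert (hy2' : hs_norm (hs_sub y (J 1 y)) <= dl) by (unfold dl, Lr; exact hy2).
    assert (hz2' : hs_norm (hs_sub z (J 1 z)) <= dl).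
    { eapply Rle_trans; [exact hz2|]. unfold dl. apply Rmult_le_compat_l; [lra|].
      apply Rinv_le_contravar; [lra|]. apply le_INR in hm. fold Lr in hm. lra. }
    set (Tw := J 1 w).
    set (d := hs_norm (hs_sub z y)).
    assert (hd : d <= 2 * Nr).
    { unfold d. pose proof (norm_sub_tri z p y). rewrite (norm_sub_sym p y) in H. lra. }
    assert (hd0 : 0 <= d) by apply norm_nonneg.
    assert (ha : hs_norm (hs_sub z Tw) <= dl + t * d).
    { pose proof (norm_sub_tri z (J 1 z) Tw). pose proof (J_ne 1 z w Rlt_0_1).
      replace (hs_sub z w) with (hs_scal t (hs_sub z y)) in H0 by (unfold w; veq).
      rewrite norm_scal, Rabs_pos_eq in H0 by lra. fold Tw in H, H0. unfold d. lra. }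
    assert (hb : hs_norm (hs_sub y Tw) <= dl + (1 - t) * d).
    { pose proof (norm_sub_tri y (J 1 y) Tw). pose proof (J_ne 1 y w Rlt_0_1).
      replace (hs_sub y w) with (hs_scal (1 - t) (hs_sub y z)) in H0 by (unfold w; veq).
      rewrite norm_scal, Rabs_pos_eq, (norm_sub_sym y z) in H0 by lra. fold Tw in H, H0. unfold d. lra. }
    assert (hid : hs_inner (hs_sub w Tw) (hs_sub w Tw) =
       (1 - t) * hs_inner (hs_sub z Tw) (hs_sub z Tw) + t * hs_inner (hs_sub y Tw) (hs_sub y Tw)
       - t * (1 - t) * hs_inner (hs_sub z y) (hs_sub z y)).
    { unfold w. iexp. isym. ring. }
    rewrite <- !norm_sq in hid. fold d in hid.
    pose proof (norm_nonneg (hs_sub z Tw)). pose proof (norm_nonneg (hs_sub y Tw)).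
    assert (hsq : hs_norm (hs_sub w Tw) * hs_norm (hs_sub w Tw) <= dl * dl + 4 * t * (1 - t) * dl * d).
    { assert (hs_norm (hs_sub z Tw) * hs_norm (hs_sub z Tw) <= (dl + t * d) * (dl + t * d))
        by (apply Rmult_le_compat; lra).
      assert (hs_norm (hs_sub y Tw) * hs_norm (hs_sub y Tw) <= (dl + (1 - t) * d) * (dl + (1 - t) * d))
        by (apply Rmult_le_compat; nra).
      assert ((1 - t) * (hs_norm (hs_sub z Tw) * hs_norm (hs_sub z Tw)) <= (1 - t) * ((dl + t * d) * (dl + t * d)))
        by (apply Rmult_le_compat_l; lra).
      assert (t * (hs_norm (hs_sub y Tw) * hs_norm (hs_sub y Tw)) <= t * ((dl + (1 - t) * d) * (dl + (1 - t) * d)))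
        by (apply Rmult_le_compat_l; lra).
      rewrite hid. nra. }
    assert (h4 : 4 * t * (1 - t) * dl * d <= dl * (2 * Nr)).
    { assert (4 * t * (1 - t) <= 1) by (pose proof (Rle_0_sqr (2 * t - 1)); unfold Rsqr in *; nra).
      assert (0 <= 4 * t * (1 - t)) by nra.
      assert (4 * t * (1 - t) * d <= 2 * Nr) by nra. nra. }
    assert (hdl1 : dl * (Lr + 1) = 1) by (unfold dl; field; lra).
    assert (hdle1 : dl <= 1) by nra.
    apply norm_le_sq. { apply Rlt_le, Rdiv_lt_0_compat; pose proof (pos_INR n); lra. }
    rewrite <- norm_sq.
    set (q := (INR n + 1) * (INR n + 1)) in *.
    assert (hq : 1 <= q) by (unfold q; pose proof (pos_INR n); nra).
    replace (1 / (INR n + 1) * (1 / (INR n + 1))) with (1 / q) by (unfold q; field; pose proof (pos_INR n); lra).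
    apply le_div1; [lra|].
    assert (hk : (dl * dl + dl * (2 * Nr)) * q <= 1).
    { assert (dl * dl <= dl * Nr) by nra.
      assert (dl * (24 * Nr * q) <= 1) by (rewrite hL in hdl1; nra).
      nra. }
    nra.
Qed.


Lemma inner_bound k' n m' z y :
  let Nr := INR (Defs.Nbound D Ec) in
  let K1 := INR k' + 1 in
  let eps := 1 / (16 * (Nr * Nr) * (K1 * K1)) in
  dlev m' <= dlev n + eps -> sqd z <= dlev m' + eps -> Kset m' z ->
  (24 * Defs.Nbound D Ec * (n + 1) ^ 2 <= m')%nat ->
  hs_norm (hs_sub y p) <= INR D + INR Ec ->
  hs_norm (hs_sub y (J 1 y)) <= 1 / (INR (24 * Defs.Nbound D Ec * (n + 1) ^ 2)%nat + 1) ->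
  hs_inner (hs_sub x0 z) (hs_sub y z) <= 1 / K1.
Proof.
  intros Nr K1 eps hd1 hd2 hz hm hy1 hy2.
  destruct N_facts as [hN1 [hN2 hN3]]. fold Nr in hN1, hN2, hN3.
  assert (hK1 : 1 <= K1) by (unfold K1; pose proof (pos_INR k'); lra).
  set (t := 1 / (4 * (Nr * Nr) * K1)).
  assert (ht0 : 0 < t) by (unfold t; apply Rdiv_lt_0_compat; nra).
  assert (ht1 : t <= 1).
  { assert (hc : 1 <= 4 * (Nr * Nr) * K1) by nra.
    unfold t, Rdiv. rewrite Rmult_1_l, <- Rinv_1. apply Rinv_le_contravar; lra. }
  assert (hw := comb_in_K n m' z y t hm hz hy1 hy2 ltac:(lra)).
  assert (hdw := dlev_le n _ hw).
  assert (hid : sqd (hs_add (hs_scal (1 - t) z) (hs_scal t y)) =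
     sqd z - 2 * t * hs_inner (hs_sub x0 z) (hs_sub y z) + t * t * hs_inner (hs_sub y z) (hs_sub y z)).
  { unfold sqd. iexp. isym. ring. }
  rewrite <- norm_sq in hid.
  assert (hyz : hs_norm (hs_sub y z) <= 2 * Nr).
  { pose proof (norm_sub_tri y p z). rewrite (norm_sub_sym p z) in H. destruct hz as [hz1 _]. lra. }
  pose proof (norm_nonneg (hs_sub y z)).
  assert (hsq : hs_norm (hs_sub y z) * hs_norm (hs_sub y z) <= 4 * (Nr * Nr)) by nra.
  set (I := hs_inner (hs_sub x0 z) (hs_sub y z)) in *.
  assert (h2 : 2 * t * I <= 2 * eps + t * t * (4 * (Nr * Nr))).
  { assert (t * t * (hs_norm (hs_sub y z) * hs_norm (hs_sub y z)) <= t * t * (4 * (Nr * Nr)))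
      by (apply Rmult_le_compat_l; nra).
    lra. }
  assert (heq : 2 * eps + t * t * (4 * (Nr * Nr)) = 2 * t * (3 / (4 * K1))).
  { unfold eps, t. field. split; nra. }
  rewrite heq in h2.
  assert (I <= 3 / (4 * K1)) by (apply Rmult_le_reg_l with (2 * t); lra).
  assert (3 / (4 * K1) <= 1 / K1).
  { unfold Rdiv. rewrite Rinv_mult. assert (0 < / K1) by (apply Rinv_0_lt_compat; lra). lra. }
  lra.
Qed.

Lemma ms_step (v : nat -> nat) m : (m <= wfun v (Defs.Nbound D Ec) m)%nat.
Proof.
  unfold wfun. pose proof Ec_pos. assert (1 <= Defs.Nbound D Ec)%nat by (unfold Defs.Nbound; lia).
  apply Nat.le_trans with (24 * Defs.Nbound D Ec * (m + 1) ^ 2)%nat; [|apply Nat.le_max_r].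
  rewrite Nat.pow_2_r. nia.
Qed.

Lemma ms_mono (v : nat -> nat) i j : (i <= j)%nat ->
  (Nat.iter i (wfun v (Defs.Nbound D Ec)) 0 <= Nat.iter j (wfun v (Defs.Nbound D Ec)) 0)%nat.
Proof.
  intro h. induction h; [lia|]. simpl. eapply Nat.le_trans; [exact IHh| apply ms_step].
Qed.

Lemma proj_lemma (k' : nat) (v : nat -> nat) :
  exists n z,
    (n <= Nat.iter (4 * Defs.Nbound D Ec ^ 4 * (k' + 1) ^ 2) (wfun v (Defs.Nbound D Ec)) 0)%nat /\
    hs_norm (hs_sub z p) <= INR D + INR Ec /\
    hs_norm (hs_sub z (J 1 z)) <= 1 / (INR (v (24 * Defs.Nbound D Ec * (n + 1) ^ 2)%nat) + 1) /\
    forall y, hs_norm (hs_sub y p) <= INR D + INR Ec ->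
      hs_norm (hs_sub y (J 1 y)) <= 1 / (INR (24 * Defs.Nbound D Ec * (n + 1) ^ 2)%nat + 1) ->
      hs_inner (hs_sub x0 z) (hs_sub y z) <= 1 / (INR k' + 1).
Proof.
  set (N := Defs.Nbound D Ec). set (R := (4 * N ^ 4 * (k' + 1) ^ 2)%nat).
  set (ms := fun i => Nat.iter i (wfun v N) 0%nat).
  set (Nr := INR N). set (K1 := INR k' + 1).
  set (eps := 1 / (16 * (Nr * Nr) * (K1 * K1))).
  destruct N_facts as [hN1 [hN2 hN3]]. fold N Nr in hN1, hN2, hN3.
  assert (hK1 : 1 <= K1) by (unfold K1; pose proof (pos_INR k'); lra).
  assert (heps : 0 < eps).
  { unfold eps; apply Rdiv_lt_0_compat; [lra|]. apply Rmult_lt_0_compat; [apply Rmult_lt_0_compat|]; nra. }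
  assert (hex : exists i, (i < R)%nat /\ dlev (ms (S i)) <= dlev (ms i) + eps).
  { destruct (Classical_Prop.classic (exists i, (i < R)%nat /\ dlev (ms (S i)) <= dlev (ms i) + eps)) as [h|h];
      [exact h|exfalso].
    assert (hall : forall i, (i < R)%nat -> dlev (ms i) + eps < dlev (ms (S i))).
    { intros i hi. destruct (Rlt_dec (dlev (ms i) + eps) (dlev (ms (S i)))) as [?|hn]; [assumption|].
      exfalso. apply h. exists i. split; [assumption| lra]. }
    assert (hind : forall i, (i <= R)%nat -> dlev (ms 0%nat) + INR i * eps <= dlev (ms i)).
    { induction i; intro hi; [simpl; lra|]. rewrite S_INR. specialize (hall i ltac:(lia)).
      specialize (IHi ltac:(lia)). lra. }
    assert (hR : (1 <= R)%nat).
    { unfold R. assert (1 <= N)%nat by (unfold N, Defs.Nbound; pose proof Ec_pos; lia).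
      assert (1 <= N ^ 4)%nat by (pose proof (Nat.pow_le_mono_l 1 N 4 H) as H'; rewrite Nat.pow_1_l in H'; exact H').
      assert (1 <= (k' + 1) ^ 2)%nat by (rewrite Nat.pow_2_r; nia). nia. }
    destruct R as [|R'] eqn:eR; [lia|].
    assert (h1 := hind R' ltac:(lia)). assert (h2 := hall R' ltac:(lia)).
    assert (hRr : INR (S R') * eps = Nr * Nr / 4).
    { rewrite <- eR. unfold R, eps, Nr, K1. inrs. field. fold Nr. split; [pose proof (pos_INR k'); lra| lra]. }
    rewrite S_INR in hRr.
    pose proof (dlev_nonneg (ms 0%nat)). pose proof (dlev_le_D (ms (S R'))). pose proof (pos_INR D).
    assert (INR D * INR D <= Nr * Nr / 4) by nra.
    lra. }
  destruct hex as [i [hi hdi]].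
  set (n := ms i). set (m' := ms (S i)).
  destruct (dlev_approx m' eps heps) as [z [hz hsz]].
  assert (hm'eq : m' = wfun v N n) by reflexivity.
  exists n, z. split; [|split; [|split]].
  - apply (ms_mono v i R). lia.
  - apply hz.
  - destruct hz as [_ hz2]. eapply Rle_trans; [exact hz2|]. apply Rmult_le_compat_l; [lra|].
    apply Rinv_le_contravar; [pose proof (pos_INR (v (24 * N * (n + 1) ^ 2)%nat)); lra|].
    apply Rplus_le_compat_r, le_INR. rewrite hm'eq. unfold wfun. apply Nat.le_max_l.
  - intros y hy1 hy2. apply (inner_bound k' n m' z y); try assumption.
    rewrite hm'eq. unfold wfun. apply Nat.le_max_r.
Qed.


Lemma halpern_step z i r :
  hs_norm (hs_sub z p) <= INR D + INR Ec ->
  hs_inner (hs_sub x0 z) (hs_sub (xs (S i)) z) <= r ->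
  hs_norm (hs_sub (J (beta i) z) z) + en i <= 1 ->
  hs_inner (hs_sub (xs (S i)) z) (hs_sub (xs (S i)) z) <=
    (1 - alpha i) * hs_inner (hs_sub (xs i) z) (hs_sub (xs i) z) + alpha i * (2 * r)
    + (1 + 4 * INR (Defs.Nbound D Ec)) * (hs_norm (hs_sub (J (beta i) z) z) + en i).
Proof.
  intros hz hr hc.
  set (al := alpha i).
  set (w := hs_add (hs_sub (J (beta i) (xs i)) z) (e i)).
  assert (hid : hs_inner (hs_sub (xs (S i)) z) (hs_sub (xs (S i)) z) =
     (1 - al) * (1 - al) * hs_inner w w + 2 * al * hs_inner (hs_sub x0 z) (hs_sub (xs (S i)) z)
     - al * al * hs_inner (hs_sub x0 z) (hs_sub x0 z)).
  { rewrite xs_S. unfold w, al. iexp. isym. ring. }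
  rewrite hid. clear hid.
  destruct N_facts as [hN1 [hN2 hN3]].
  set (Nr := INR (Defs.Nbound D Ec)) in *.
  set (c := hs_norm (hs_sub (J (beta i) z) z) + en i) in *.
  set (a0 := hs_norm (hs_sub (xs i) z)).
  assert (hw : hs_norm w <= a0 + c).
  { replace w with (hs_add (hs_add (hs_sub (J (beta i) (xs i)) (J (beta i) z)) (hs_sub (J (beta i) z) z)) (e i))
      by (unfold w; veq).
    eapply Rle_trans; [apply norm_triangle|].
    pose proof (norm_triangle (hs_sub (J (beta i) (xs i)) (J (beta i) z)) (hs_sub (J (beta i) z) z)).
    pose proof (J_ne (beta i) (xs i) z (Hbeta i)). unfold c, a0, en. lra. }
  assert (ha0 : a0 <= 2 * Nr).
  { unfold a0. pose proof (norm_sub_tri (xs i) p z). rewrite (norm_sub_sym p z) in H. pose proof (xs_bound i). lra. }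
  pose proof (norm_nonneg w). pose proof (norm_nonneg (hs_sub (xs i) z)) as ha0'. fold a0 in ha0'.
  assert (hc0 : 0 <= c) by (unfold c, en; pose proof (norm_nonneg (hs_sub (J (beta i) z) z)); pose proof (norm_nonneg (e i)); lra).
  rewrite <- !norm_sq. fold a0.
  pose proof (Halpha i) as hai. fold al in hai.
  assert (hww : hs_norm w * hs_norm w <= (a0 + c) * (a0 + c)) by (apply Rmult_le_compat; lra).
  assert (h1 : (1 - al) * (1 - al) * (hs_norm w * hs_norm w) <= (1 - al) * ((a0 + c) * (a0 + c))).
  { assert (0 <= hs_norm w * hs_norm w) by nra.
    assert ((1 - al) * (1 - al) * (hs_norm w * hs_norm w) <= (1 - al) * (hs_norm w * hs_norm w)) by nra.
    assert ((1 - al) * (hs_norm w * hs_norm w) <= (1 - al) * ((a0 + c) * (a0 + c))) by (apply Rmult_le_compat_l; lra).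
    lra. }
  assert (h2 : (1 - al) * ((a0 + c) * (a0 + c)) <= (1 - al) * (a0 * a0) + (1 + 4 * Nr) * c).
  { assert (0 <= c * (2 * a0 + c)) by (apply Rmult_le_pos; lra).
    assert ((1 - al) * (c * (2 * a0 + c)) <= c * (2 * a0 + c)) by nra.
    assert (c * (2 * a0 + c) <= c * (1 + 4 * Nr)) by (apply Rmult_le_compat_l; lra).
    nra. }
  assert (h3 : 2 * al * hs_inner (hs_sub x0 z) (hs_sub (xs (S i)) z) <= al * (2 * r)) by nra.
  pose proof (norm_nonneg (hs_sub x0 z)).
  assert (0 <= al * al * (hs_norm (hs_sub x0 z) * hs_norm (hs_sub x0 z))) by (apply Rmult_le_pos; nra).
  lra.
Qed.


Lemma chi1_mono k1 k2 : (k1 <= k2)%nat -> (chi1 a B E D Ec k1 <= chi1 a B E D Ec k2)%nat.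
Proof.
  intro h. unfold chi1, xi.
  assert (a (2 * (2 * D + Ec) * (4 * k1 + 3 + 1) - 1) <= a (2 * (2 * D + Ec) * (4 * k2 + 3 + 1) - 1))%nat
    by (apply Ha; nia).
  assert (E (2 * (4 * k1 + 3) + 1) <= E (2 * (4 * k2 + 3) + 1))%nat by (apply HE; lia).
  assert (B (8 * (D + Ec) * (k1 + 1) - 1) <= B (8 * (D + Ec) * (k2 + 1) - 1))%nat by (apply HB; nia).
  lia.
Qed.

Lemma jz_bound z H i :
  hs_norm (hs_sub z (J 1 z)) <= 1 / (INR (Nat.max 2 (b H) * (H + 1) - 1) + 1) ->
  (i <= H)%nat ->
  hs_norm (hs_sub (J (beta i) z) z) <= 1 / (INR H + 1).
Proof.
  intros hz hi.
  rewrite INR_pred in hz by (pose proof (Nat.le_max_l 2 (b H)); nia).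
  rewrite mult_INR, plus_INR, INR1 in hz.
  set (M := INR (Nat.max 2 (b H))) in *.
  assert (hM2 : 2 <= M) by (unfold M; rewrite <- INR2; apply le_INR, Nat.le_max_l).
  assert (hMb : beta i <= M).
  { eapply Rle_trans; [apply Q3'|]. unfold M. apply le_INR.
    eapply Nat.le_trans; [apply Hb, hi| apply Nat.le_max_r]. }
  pose proof (res_compare A J mm res (beta i) z (Hbeta i)).
  rewrite (norm_sub_sym (J 1 z) z) in H0.
  assert (Rmax 2 (beta i) <= M) by (apply Rmax_lub; lra).
  pose proof (norm_nonneg (hs_sub z (J 1 z))). pose proof (pos_INR H).
  eapply Rle_trans; [exact H0|].
  apply Rle_trans with (M * (1 / (M * (INR H + 1)))).
  { apply Rmult_le_compat; try lra. pose proof (Hbeta i). unfold Rmax; destruct Rle_dec; lra. }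
  right. field. lra.
Qed.

Lemma main_in (k : nat) (f : nat -> nat) : nat_monotone f ->
  exists n, (n <= Phi2 a b B E A' D Ec k f)%nat /\
      forall i j, (n <= i <= f n)%nat -> (n <= j <= f n)%nat ->
        hs_norm (hs_sub (xs i) (xs j)) <= 1 / (INR k + 1).
Proof.
  intro hf.
  set (N := Defs.Nbound D Ec).
  set (kt := (4 * (k + 1) ^ 2 - 1)%nat).
  set (K4 := (16 * (1 + 4 * N) * (k + 1) ^ 2 - 1)%nat).
  set (g := fun m => Nat.max m (E K4 + 1)).
  set (sg := fun m => sigma2 A' N kt (g m)).
  set (hbar := fun m => ((1 + 4 * N) * (16 * (k + 1) ^ 2 * (f (sg m) + 1) + 1) - 1)%nat).
  set (k' := (32 * (k + 1) ^ 2 - 1)%nat).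
  set (v := fun m => nu b hbar (chi1 a B E D Ec m)).
  destruct (proj_lemma k' v) as [n' [z [hn' [hz1 [hz2 hz3]]]]].
  fold N in hn', hz2, hz3.
  set (L := (24 * N * (n' + 1) ^ 2)%nat) in *.
  set (n0 := chi1 a B E D Ec L).
  set (m0 := g n0).
  set (K2 := (16 * N ^ 2 * (kt + 1) - 1)%nat).
  set (sig := sg n0).
  assert (hsig : sig = (A' m0 K2 + 1)%nat) by reflexivity.
  assert (hsg_mono : forall m1 m2, (m1 <= m2)%nat -> (sg m1 <= sg m2)%nat).
  { intros m1 m2 h. unfold sg, sigma2. apply Nat.add_le_mono_r. apply HA'; [lia|]. unfold g. lia. }
  exists sig. split.
  { change (sg n0 <= sg (Psi a b B E D Ec k' hbar))%nat. apply hsg_mono.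
    unfold Psi. cbv zeta. fold N. fold k'. apply chi1_mono. unfold L.
    apply Nat.mul_le_mono_l. apply Nat.pow_le_mono_l. apply Nat.add_le_mono_r. exact hn'. }
  destruct N_facts as [hN1 [hN2 hN3]]. fold N in hN1, hN2, hN3. set (Nr := INR N) in *.
  set (kk := INR k + 1).
  assert (hkk : 1 <= kk) by (unfold kk; pose proof (pos_INR k); lra).
  assert (hkpow : (1 <= (k + 1) ^ 2)%nat) by (rewrite Nat.pow_2_r; nia).
  assert (hNpos : (1 <= N)%nat) by (unfold N, Defs.Nbound; pose proof Ec_pos; lia).
  assert (hm0n0 : (n0 <= m0)%nat) by (unfold m0, g; lia).
  assert (hm0E : (E K4 + 1 <= m0)%nat) by (unfold m0, g; lia).
  set (H := hbar n0).
  assert (hHf : (f sig <= H)%nat) by (unfold H, hbar; fold sig; nia).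
  assert (hHr : INR H + 1 = (1 + 4 * Nr) * (16 * (kk * kk) * (INR (f sig) + 1) + 1)).
  { unfold H, hbar. fold sig. rewrite INR_pred by nia. inrs. unfold Nr, kk. ring. }
  assert (hK4r : INR K4 + 1 = 16 * (1 + 4 * Nr) * (kk * kk)).
  { unfold K4. rewrite INR_pred by nia. inrs. unfold Nr, kk. ring. }
  assert (hK2r : INR K2 + 1 = 16 * (Nr * Nr) * (4 * (kk * kk))).
  { unfold K2, kt. replace (4 * (k + 1) ^ 2 - 1 + 1)%nat with (4 * (k + 1) ^ 2)%nat by lia.
    assert (1 <= N ^ 2)%nat by (rewrite Nat.pow_2_r; nia).
    rewrite INR_pred by nia. inrs. unfold Nr, kk. ring. }
  assert (hk'r : INR k' + 1 = 32 * (kk * kk)).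
  { unfold k'. rewrite INR_pred by nia. inrs. unfold kk. ring. }
  assert (hJz : forall i, (i <= H)%nat -> hs_norm (hs_sub (J (beta i) z) z) <= 1 / (INR H + 1)).
  { intros i hi. apply jz_bound; [|exact hi]. exact hz2. }
  assert (hHpos : 2 <= INR H + 1).
  { rewrite hHr. pose proof (pos_INR (f sig)). assert (1 <= kk * kk) by nra.
    assert (16 * (kk * kk) <= 16 * (kk * kk) * (INR (f sig) + 1)) by nra. nra. }
  assert (hK4pos : 2 <= INR K4 + 1) by (rewrite hK4r; assert (1 <= kk * kk) by nra; nra).
  set (c := fun i => hs_norm (hs_sub (J (beta i) z) z) + en i).
  assert (hc0 : forall i, 0 <= c i).
  { intro i. unfold c. pose proof (norm_nonneg (hs_sub (J (beta i) z) z)). pose proof (en_nonneg i). lra. }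
  set (r := 1 / (INR k' + 1)).
  assert (hA'm0 : (m0 <= A' m0 K2)%nat).
  { destruct (le_lt_dec m0 (A' m0 K2)) as [?|hlt]; [assumption|exfalso].
    pose proof (Q2 K2 m0) as hq. unfold rprod_range in hq. rewrite fold_ppf in hq.
    replace (S (A' m0 K2) - m0)%nat with 0%nat in hq by lia. simpl ppf in hq.
    rewrite hK2r in hq. assert (1 <= kk * kk) by nra. assert (1 <= Nr * Nr) by nra.
    assert (1 / (16 * (Nr * Nr) * (4 * (kk * kk))) < 1).
    { apply Rmult_lt_reg_r with (16 * (Nr * Nr) * (4 * (kk * kk))); [nra|].
      replace (1 / (16 * (Nr * Nr) * (4 * (kk * kk))) * (16 * (Nr * Nr) * (4 * (kk * kk)))) with 1 by (field; nra).
      nra. }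
    lra. }
  assert (claim : forall m, (sig <= m <= f sig)%nat -> hs_norm (hs_sub (xs m) z) <= 1 / (2 * kk)).
  { intros m [hm1 hm2].
    set (len := (m - m0)%nat).
    assert (hmeq : m = (m0 + len)%nat) by (unfold len; rewrite hsig in hm1; lia).
    set (s := fun j => hs_inner (hs_sub (xs j) z) (hs_sub (xs j) z)).
    assert (hun := xu_unroll s alpha c (2 * r) (1 + 4 * Nr) m0 len
      ltac:(intro i; pose proof (Halpha i); lra)
      ltac:(unfold r; apply Rlt_le, Rmult_lt_0_compat; [lra| apply Rdiv_lt_0_compat; [lra| rewrite hk'r; nra]])
      ltac:(lra) hc0).
    assert (hstep : forall i, (m0 <= i < m0 + len)%nat -> s (S i) <= (1 - alpha i) * s i + alpha i * (2 * r) + (1 + 4 * Nr) * c i).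
    { intros i hi. unfold s, c. apply halpern_step; [exact hz1| |].
      - apply hz3; [apply xs_bound|]. apply chi1_step. lia.
      - assert (hiH : (i <= H)%nat) by lia.
        pose proof (hJz i hiH). pose proof (e_single K4 i ltac:(lia)).
        assert (1 / (INR H + 1) <= 1 / 2) by (apply Rmult_le_compat_l; [lra| apply Rinv_le_contravar; lra]).
        assert (1 / (INR K4 + 1) <= 1 / 2) by (apply Rmult_le_compat_l; [lra| apply Rinv_le_contravar; lra]).
        lra. }
    specialize (hun hstep len (le_n _)).
    rewrite <- hmeq in hun.
    assert (hP : ppf (fun i => 1 - alpha i) m0 len <= 1 / (INR K2 + 1)).
    { eapply Rle_trans; [| apply (Q2 K2 m0)]. unfold rprod_range. rewrite fold_ppf.
      apply ppf_sub; [intro i; pose proof (Halpha i); lra| lia]. }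
    assert (hP0 : 0 <= ppf (fun i => 1 - alpha i) m0 len) by (apply ppf_bounds; intro i; pose proof (Halpha i); lra).
    assert (hs0 : s m0 <= 4 * (Nr * Nr)).
    { unfold s. rewrite <- norm_sq. pose proof (norm_sub_tri (xs m0) p z). rewrite (norm_sub_sym p z) in H0.
      pose proof (xs_bound m0). pose proof (norm_nonneg (hs_sub (xs m0) z)).
      assert (hs_norm (hs_sub (xs m0) z) <= 2 * Nr) by lra. nra. }
    assert (hs0' : 0 <= s m0) by (unfold s; apply hs_inner_pos).
    assert (hPs : ppf (fun i => 1 - alpha i) m0 len * s m0 <= 1 / (16 * (kk * kk))).
    { apply Rle_trans with (1 / (INR K2 + 1) * (4 * (Nr * Nr))); [apply Rmult_le_compat; lra|].
      rewrite hK2r. right. field. lra. }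
    assert (hsum : (1 + 4 * Nr) * psf c m0 len <= 2 / (16 * (kk * kk))).
    { unfold c. rewrite psf_plus.
      assert (h1 : psf (fun i => hs_norm (hs_sub (J (beta i) z) z)) m0 len <= INR len * (1 / (INR H + 1))).
      { apply psf_const. intros i hi. apply hJz. lia. }
      assert (h2 : psf en m0 len <= 1 / (INR K4 + 1)) by (apply e_tail; exact hm0E).
      assert (hlen : INR len <= INR (f sig)) by (apply le_INR; lia).
      rewrite hHr in h1. rewrite hK4r in h2.
      pose proof (pos_INR len).
      assert (h3 : INR len * (1 / ((1 + 4 * Nr) * (16 * (kk * kk) * (INR (f sig) + 1) + 1))) <=
                   1 / ((1 + 4 * Nr) * (16 * (kk * kk)))).
      { pose proof (pos_INR (f sig)).
        apply le_div1; [nra|].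
        replace (INR len * (1 / ((1 + 4 * Nr) * (16 * (kk * kk) * (INR (f sig) + 1) + 1))) * ((1 + 4 * Nr) * (16 * (kk * kk))))
          with (INR len * (16 * (kk * kk)) / (16 * (kk * kk) * (INR (f sig) + 1) + 1)) by (field; nra).
        apply Rmult_le_reg_r with (16 * (kk * kk) * (INR (f sig) + 1) + 1); [nra|].
        unfold Rdiv. rewrite Rmult_assoc, Rinv_l by nra. nra. }
      assert (heq : (1 + 4 * Nr) * (1 / ((1 + 4 * Nr) * (16 * (kk * kk))) + 1 / (16 * (1 + 4 * Nr) * (kk * kk)))
        = 2 / (16 * (kk * kk))) by (field; nra).
      rewrite <- heq. apply Rmult_le_compat_l; [lra|]. lra. }
    assert (hr2 : 2 * r = 1 / (16 * (kk * kk))) by (unfold r; rewrite hk'r; field; nra).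
    apply norm_le_sq; [apply Rlt_le, Rdiv_lt_0_compat; lra|].
    fold (s m). 
    replace (1 / (2 * kk) * (1 / (2 * kk))) with (4 / (16 * (kk * kk))) by (field; lra).
    replace (4 / (16 * (kk * kk))) with (1 / (16 * (kk * kk)) + 1 / (16 * (kk * kk)) + 2 / (16 * (kk * kk))) by (field; lra).
    lra. }
  intros i j hi hj.
  pose proof (claim i hi). pose proof (claim j hj).
  pose proof (norm_sub_tri (xs i) z (xs j)). rewrite (norm_sub_sym z (xs j)) in H2.
  replace (1 / kk) with (1 / (2 * kk) + 1 / (2 * kk)) by (field; lra). lra.
Qed.

End Main.

Theorem mainTheorem14
  (X : HilbertSpace) (A : X -> X -> Prop) (J : R -> X -> X)
  (alpha beta : nat -> R) (e : nat -> X) (x0 : X)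
  (a b B E : nat -> nat) (A' : nat -> nat -> nat) (D Ec : nat) (p : X) :
  maximal_monotone A ->
  is_resolvent A J ->
  (forall n, 0 < alpha n < 1) ->
  (forall n, 0 < beta n) ->
  nat_monotone a -> nat_monotone b -> nat_monotone B -> nat_monotone E ->
  (forall m m' k k', (k <= k')%nat -> (m <= m')%nat -> (A' m k <= A' m' k')%nat) ->
  (* (Q1) *) (forall k n, (a k <= n)%nat -> alpha n <= 1 / (INR k + 1)) ->
  (* (Q2') *) (forall k m, rprod_range (fun i => 1 - alpha i) m (A' m k) <= 1 / (INR k + 1)) ->
  (* (Q3') *) (forall n, beta n <= INR (b n)) ->
  (* (Q3) *) (forall k n, (B k <= n)%nat -> INR k <= beta n) ->
  (* (Q4) *) (forall k n, rsum_range (fun i => hs_norm (e i)) (E k + 1) (E k + n) <= 1 / (INR k + 1)) ->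
  INR Ec >= 1 + sum_f_R0 (fun i => hs_norm (e i)) (E 0%nat) ->
  A p hs_zero ->
  INR D >= hs_norm (hs_sub x0 p) ->
  forall (k : nat) (f : nat -> nat), nat_monotone f ->
    exists n, (n <= Phi2 a b B E A' D Ec k f)%nat /\
      forall i j, (n <= i <= f n)%nat -> (n <= j <= f n)%nat ->
        hs_norm (hs_sub (hppa J alpha beta e x0 i) (hppa J alpha beta e x0 j)) <= 1 / (INR k + 1).

Proof.
  intros Hmax Hres Hal Hbe Ha Hb HB HE HA' Q1 Q2 Q3' Q3 Q4 HEc Hp HD k f hf.
  exact (main_in X A J alpha beta e x0 a b B E A' D Ec p (proj1 Hmax) Hres Hal Hbe Ha Hb HB HE HA'
    Q1 Q2 Q3' Q3 Q4 HEc Hp HD k f hf).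
Qed.
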